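(* Fix any strategies $g^{-i}=(g^j)_{j\ne i}$ of the players other than $i$, and any strategy $g^i$ of player $i$. Then there exists a strategy $s^i$ of player $i$ of the form $A^i_t\sim s^i_t(\cdot\mid a_{1:t-1},x^i_t)$ (depending on the private information only through the current type) such that $$P^{s^ig^{-i}}(X_t=x_t,A_t=a_t)=P^{g^ig^{-i}}(X_t=x_t,A_t=a_t)\quad\forall t\in\mathcal T,\ x_t\in\mathcal X,\ a_t\in\mathcal A,$$ and consequently $J^{i,s^ig^{-i}}=J^{i,g^ig^{-i}}$ (indeed $J^{j,s^ig^{-i}}=J^{j,g^ig^{-i}}$ for every player $j$).
   Context: Model: players $\mathcal N=\{1,\dots,N\}$, horizon $\mathcal T=\{1,\dots,T\}$. Player $i$ has a finite type set $\mathcal X^i$ and a finite action set $\mathcal A^i$; $\mathcal X=\times_i\mathcal X^i$, $\mathcal A=\times_i\mathcal A^i$. Types evolve as $P(x_1)=\prod_iQ^i_1(x^i_1)$ and $P(x_{t+1}\mid x_{1:t},a_{1:t})=\prod_iQ^i_{t+1}(x^i_{t+1}\mid x^i_t,a_t)$ for known kernels (each may depend on the full action profile $a_t$). Player $i$ privately observes its own types and all actions are public, so at time $t$ player $i$ knows $(a_{1:t-1},x^i_{1:t})$. A (general) strategy $g^i$ specifies $g^i_t(\cdot\mid a_{1:t-1},x^i_{1:t})\in\mathcal P(\mathcal A^i)$; given their information, players randomize independently. Player $i$ receives reward $R^i(x_t,a_t)$ at each time and $J^{i,g}=\mathbb E^g[\sum_{t=1}^TR^i(X_t,A_t)]$.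 $P^g$, $\mathbb E^g$ denote probability and expectation under profile $g$; $-i$ denotes all players except $i$. *)

(* Defs.v *)
From HB Require Import structures.
From mathcomp Require Import all_boot all_order all_algebra.
Set Implicit Arguments. Unset Strict Implicit. Unset Printing Implicit Defensive.
Import Order.TTheory GRing.Theory Num.Theory.
Local Open Scope ring_scope.

Section Game.
Variables (R : realFieldType) (N : nat).
Variables (X A : 'I_N -> finType).

Definition Xp := {dffun forall i : 'I_N, X i}.
Definition Ap := {dffun forall i : 'I_N, A i}.

(* Behavioural strategy of player i:
   g t a_{1:t-1} x^i_{1:t} a^i = g^i_t(a^i | a_{1:t-1}, x^i_{1:t}), t >= 1. *)
Definition strat (i : 'I_N) := nat -> seq Ap -> seq (X i) -> A i -> R.
Definition profile := forall i : 'I_N, strat i.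

Definition valid_strat (i : 'I_N) (g : strat i) : Prop :=
  forall t h xs, (forall a, 0 <= g t h xs a) /\ \sum_(a : A i) g t h xs a = 1.

Definition markov_strat (i : 'I_N) (g : strat i) : Prop :=
  forall t h xs ys x a, g t h (rcons xs x) a = g t h (rcons ys x) a.

(* Q1 i = Q^i_1 ;  Q i t x a x' = Q^i_t(x' | x, a)  (kernel producing the time-t type) *)
Variables (Q1 : forall i : 'I_N, X i -> R)
          (Q : forall i : 'I_N, nat -> X i -> Ap -> X i -> R).

Definition valid_kernels : Prop :=
  (forall i, (forall x, 0 <= @Q1 i x) /\ \sum_(x : X i) @Q1 i x = 1) /\
  (forall i t x a, (forall y, 0 <= @Q i t x a y) /\ \sum_(y : X i) @Q i t x a y = 1).

(* probability that the first steps are h, given time t and past px, pa *)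
Fixpoint prob_aux (g : profile) (t : nat) (px : seq Xp) (pa : seq Ap)
    (h : seq (Xp * Ap)) : R :=
  match h with
  | [::] => 1
  | (x, a) :: h' =>
      (match px, pa with
       | y :: ys, b :: bs =>
           \prod_(i < N) @Q i t (last y ys i) (last b bs) (x i)
       | _, _ => \prod_(i < N) @Q1 i (x i)
       end) *
      (\prod_(i < N) g i t pa [seq (z : Xp) i | z <- rcons px x] (a i)) *
      prob_aux g t.+1 (rcons px x) (rcons pa a) h'
  end.

Definition prob (g : profile) (h : seq (Xp * Ap)) : R := prob_aux g 1 [::] [::] h.

(* P^g(X_t = x, A_t = a), for t >= 1 *)
Definition marg (g : profile) (t : nat) (x : Xp) (a : Ap) : R :=
  \sum_(h : (t.-1).-tuple (Xp * Ap)) prob g (rcons h (x, a)).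

Definition payoff (Rw : 'I_N -> Xp -> Ap -> R) (T : nat) (j : 'I_N) (g : profile) : R :=
  \sum_(1 <= t < T.+1) \sum_(x : Xp) \sum_(a : Ap) Rw j x a * marg g t x a.

End Game.

(* Main.v *)
Require Import Defs.
From HB Require Import structures.
From mathcomp Require Import all_boot all_order all_algebra.
Set Implicit Arguments. Unset Strict Implicit. Unset Printing Implicit Defensive.
Import Order.TTheory GRing.Theory Num.Theory.
Local Open Scope ring_scope.

Lemma belast_tupleP (T : Type) n (e : n.+1.-tuple T) :
  size (belast (thead e) (behead e)) == n.
Proof. by rewrite size_belast size_behead size_tuple. Qed.

Definition unrcons (T : Type) n (e : n.+1.-tuple T) : n.-tuple T * T :=
  (Tuple (belast_tupleP e), last (thead e) (behead e)).

Lemma sum_tuple_rcons (R : nmodType) (T : finType) n (F : n.+1.-tuple T -> R) :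
  \sum_(e : n.+1.-tuple T) F e =
  \sum_(e : n.-tuple T) \sum_(p : T) F [tuple of rcons e p].
Proof.
rewrite pair_big /=.
rewrite (reindex (fun q : n.-tuple T * T => [tuple of rcons q.1 q.2])) //=.
exists (@unrcons T n) => [[t p] _|e _].
  have E := congr1 val (tuple_eta [tuple of rcons t p]); rewrite /= lastI in E.
  move/eqP: E; rewrite eq_sym eqseq_rcons => /andP[/eqP E1 /eqP E2].
  by rewrite /unrcons; congr (_, _) => //; apply: val_inj => /=.
apply: val_inj => /=; rewrite -lastI.
by have E := congr1 val (tuple_eta e).
Qed.
Lemma fiber_sum (R : comPzRingType) (D E K : finType) (pi : D -> E) (ka : E -> K)
  (tau : D -> E -> D) (o : D -> R) (f1 f2 : E -> R) :
  (forall d e, pi (tau d e) = e) ->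
  (forall d e e', tau (tau d e) e' = tau d e') ->
  (forall d, tau d (pi d) = d) ->
  (forall d e, ka e = ka (pi d) -> o (tau d e) = o d) ->
  (forall k, \sum_(e | ka e == k) f1 e = \sum_(e | ka e == k) f2 e) ->
  \sum_d f1 (pi d) * o d = \sum_d f2 (pi d) * o d.
Proof.
move=> H1 H2 H3 H4 Hf.
pose Ko e := \sum_(d | pi d == e) o d.
have HK e e' : ka e = ka e' -> Ko e = Ko e'.
  move=> kee; rewrite /Ko (reindex_onto (tau^~ e) (tau^~ e')); last first.
    by move=> d /eqP <-; rewrite H2 H3.
  apply: eq_big => d.
    rewrite H1 eqxx H2 /=; apply/eqP/eqP => [<-|<-]; first by rewrite H1.
    by rewrite H3.
  move=> /andP[_ /eqP td]; have pd : pi d = e' by rewrite -td H1.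
  by apply: H4; rewrite pd.
have step f : \sum_d f (pi d) * o d =
    \sum_(k : K) \sum_(e | ka e == k) f e * Ko e.
  rewrite (partition_big pi xpredT) //=.
  rewrite (partition_big ka xpredT) //=.
  apply: eq_bigr => k _; apply: eq_bigr => e _.
  rewrite /Ko mulr_sumr; apply: eq_bigr => d /eqP <-; by [].
rewrite !step; apply: eq_bigr => k _.
case: (pickP (fun e => ka e == k)) => [e0 He0|Hn]; last first.
  by rewrite !big_pred0.
rewrite (eq_bigr (fun e => f1 e * Ko e0)); last first.
  by move=> e /eqP ke; rewrite (HK e e0) // ke; apply/esym/eqP.
rewrite [RHS](eq_bigr (fun e => f2 e * Ko e0)); last first.
  by move=> e /eqP ke; rewrite (HK e e0) // ke; apply/esym/eqP.
by rewrite -!mulr_suml Hf.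
Qed.
Section Aux.
Variables (R : realFieldType) (N : nat) (X A : 'I_N -> finType).
Variables (Q1 : forall i : 'I_N, X i -> R)
          (Q : forall i : 'I_N, nat -> X i -> Ap A -> X i -> R).

Definition stepQ (j : 'I_N) t (px : seq (X j)) (pa : seq (Ap A)) (x : X j) : R :=
  match px, pa with
  | y :: ys, b :: bs => Q t (last y ys) (last b bs) x
  | _, _ => Q1 x
  end.

Fixpoint fj (j : 'I_N) (gj : strat R X A j) t (px : seq (X j)) (pa : seq (Ap A))
   (h : seq (X j * Ap A)) : R :=
  match h with
  | [::] => 1
  | (x, a) :: h' => stepQ t px pa x * gj t pa (rcons px x) (a j) *
                    fj gj t.+1 (rcons px x) (rcons pa a) h'
  end.

Definition projj (j : 'I_N) (p : Xp X * Ap A) : X j * Ap A := (p.1 j, p.2).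

Lemma fact_prob (g : profile R X A) t px pa h :
  prob_aux Q1 Q g t px pa h =
  \prod_(j < N) fj (g j) t [seq (z : Xp X) j | z <- px] pa (map (@projj j) h).
Proof.
elim: h t px pa => [|[x a] h IH] t px pa /=; first by rewrite big1.
rewrite IH !big_split /=; congr (_ * _ * _).
  case: px => [|y ys] /=; first by [].
  case: pa => [|b bs] //=.
  by apply: eq_bigr => j _; rewrite (last_map (fun z : Xp X => z j)).
by apply: eq_bigr => j _; rewrite map_rcons.
by apply: eq_bigr => j _; rewrite map_rcons.
Qed.

Lemma fj_rcons j (gj : strat R X A j) t px pa h p :
  fj gj t px pa (rcons h p) = fj gj t px pa h *
   (stepQ (t + size h)%N (px ++ unzip1 h) (pa ++ unzip2 h) p.1 *
    gj (t + size h)%N (pa ++ unzip2 h) (rcons (px ++ unzip1 h) p.1) (p.2 j)).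
Proof.
elim: h t px pa => [|[x a] h IH] t px pa /=.
  by case: p => x a /=; rewrite !cats0 !addn0 mul1r mulr1.
by rewrite IH !mulrA -!cat_rcons addSnnS.
Qed.


Lemma fj_ge0 j (gj : strat R X A j) t px pa h :
  (forall x, 0 <= @Q1 j x) -> (forall t x a y, 0 <= @Q j t x a y) ->
  valid_strat gj -> 0 <= fj gj t px pa h.
Proof.
move=> h1 h2 hv; elim: h t px pa => [|[x a] h IH] t px pa //=.
apply: mulr_ge0 => //; apply: mulr_ge0; last by case: (hv t pa (rcons px x)).
by rewrite /stepQ; case: px => [|y ys]; case: pa.
Qed.

Lemma stepQ_rcons j t (xs : seq (X j)) z (bs : seq (Ap A)) b y :
  stepQ t (rcons xs z) (rcons bs b) y = @Q j t z b y.
Proof.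
by case: xs => [|x xs]; case: bs => [|c bs] //=; rewrite ?last_rcons.
Qed.

Section Player.
Local Unset Implicit Arguments.
Variables (g : profile R X A) (i : 'I_N).

Definition Hs (gi : strat R X A i) n t (k : seq (Ap A)) (y : X i) : R :=
  \sum_(e : n.-tuple (X i * Ap A) | unzip2 e == k)
     fj gi 1 [::] [::] e * stepQ t (unzip1 e) k y.

Definition Gs (gi : strat R X A i) n (k : seq (Ap A)) (y : X i) (a : Ap A) : R :=
  \sum_(e : n.-tuple (X i * Ap A) | unzip2 e == k) fj gi 1 [::] [::] (rcons e (y, a)).

Definition Num n t (k : seq (Ap A)) (y : X i) (ai : A i) : R :=
  \sum_(e : n.-tuple (X i * Ap A) | unzip2 e == k)
     fj (g i) 1 [::] [::] e * stepQ t (unzip1 e) k y * g i t k (rcons (unzip1 e) y) ai.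

Definition si : strat R X A i := fun t k xs ai =>
  if xs is z :: zs then
    (if Hs (g i) (size k) t k (last z zs) == 0 then g i t k [:: last z zs] ai
     else Num (size k) t k (last z zs) ai / Hs (g i) (size k) t k (last z zs))
  else g i t k xs ai.

Lemma si_markov : markov_strat si.
Proof.
move=> t h xs ys x a.
by case: xs => [|x1 xs]; case: ys => [|y1 ys] //=; rewrite ?last_rcons.
Qed.

Variables (hv : valid_strat (g i)) (hQ1 : forall x, 0 <= @Q1 i x)
  (hQ2 : forall t x a y, 0 <= @Q i t x a y).

Lemma stepQ_ge0 t px pa y : 0 <= @stepQ i t px pa y.
Proof. by rewrite /stepQ; case: px => [|z zs]; case: pa. Qed.

Lemma Num_ge0 n t k y ai : 0 <= Num n t k y ai.
Proof.
apply: sumr_ge0 => e _; apply: mulr_ge0; last by case: (hv t k (rcons (unzip1 e) y)).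
by apply: mulr_ge0; [apply: fj_ge0|apply: stepQ_ge0].
Qed.

Lemma sum_Num n t k y : \sum_(ai : A i) Num n t k y ai = Hs (g i) n t k y.
Proof.
rewrite /Num exchange_big /=; apply: eq_bigr => e _.
by rewrite -mulr_sumr; case: (hv t k (rcons (unzip1 e) y)) => _ ->; rewrite mulr1.
Qed.

Lemma Hs_ge0 n t k y : 0 <= Hs (g i) n t k y.
Proof. by rewrite -sum_Num; apply: sumr_ge0 => ai _; apply: Num_ge0. Qed.

Lemma si_valid : valid_strat si.
Proof.
rewrite /valid_strat /si => t k xs; case: xs => [|z zs]; first exact: hv.
set D := Hs _ _ _ _ _.
have [hD0|hD] := eqVneq D 0; first exact: hv.
split.
  by move=> a; apply: divr_ge0; [apply: Num_ge0|apply: Hs_ge0].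
by rewrite -mulr_suml /D sum_Num mulfV.
Qed.

Lemma Gs_expand (gi : strat R X A i) n k y a :
  Gs gi n k y a = \sum_(e : n.-tuple (X i * Ap A) | unzip2 e == k)
    fj gi 1 [::] [::] e * (stepQ n.+1 (unzip1 e) k y * gi n.+1 k (rcons (unzip1 e) y) (a i)).
Proof.
apply: eq_bigr => e /eqP <-; by rewrite fj_rcons /= size_tuple add1n.
Qed.

Lemma Hs_rec (gi : strat R X A i) n t k' b y :
  Hs gi n.+1 t (rcons k' b) y = \sum_(z : X i) Gs gi n k' z b * @Q i t z b y.
Proof.
rewrite /Hs /Gs big_mkcond sum_tuple_rcons /=.
under [RHS]eq_bigr do rewrite big_distrl /=.
rewrite [RHS]exchange_big [RHS]big_mkcond; apply: eq_bigr => e _.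
rewrite (eq_bigr (fun p : X i * Ap A =>
   if unzip2 e == k' then (if p.2 == b then
     fj gi 1 [::] [::] (rcons e (p.1, p.2)) * @Q i t p.1 b y else 0) else 0)); last first.
  case=> z b0 _ /=; rewrite /unzip2 /unzip1 !map_rcons eqseq_rcons stepQ_rcons.
  by case: (map snd e == k'); case: (b0 == b).
case: ifP => ek; last first.
  by apply: big1.
rewrite -(pair_big xpredT xpredT (fun z b' => if b' == b then
     fj gi 1 [::] [::] (rcons e (z, b')) * @Q i t z b y else 0)) /=.
apply: eq_bigr => z _; by rewrite -big_mkcond big_pred1_eq.
Qed.

Lemma si_rcons t k xs y ai :
  si t k (rcons xs y) ai =
  (if Hs (g i) (size k) t k y == 0 then g i t k [:: y] ai
   else Num (size k) t k y ai / Hs (g i) (size k) t k y).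
Proof. by case: xs => [|x xs] //=; rewrite last_rcons. Qed.

Lemma size_unzip2_tuple n (e : n.-tuple (X i * Ap A)) : size (unzip2 e) = n.
Proof. by rewrite size_map size_tuple. Qed.

Lemma Gs_eq_of_Hs n :
  (forall k y, Hs si n n.+1 k y = Hs (g i) n n.+1 k y) ->
  forall k y a, Gs si n k y a = Gs (g i) n k y a.
Proof.
move=> HH k y a.
have [szk|szk] := eqVneq (size k) n; last first.
  rewrite /Gs !big_pred0 // => e; apply/negP => /eqP ek;
  by move: szk; rewrite -ek size_unzip2_tuple eqxx.
rewrite !Gs_expand.
under eq_bigr do rewrite si_rcons szk mulrA.
rewrite -mulr_suml -/(Hs si n n.+1 k y) HH.
have -> : \sum_(e : n.-tuple (X i * Ap A) | unzip2 e == k)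
    fj (g i) 1 [::] [::] e * (stepQ n.+1 (unzip1 e) k y * g i n.+1 k (rcons (unzip1 e) y) (a i))
  = Num n n.+1 k y (a i).
  by apply: eq_bigr => e _; rewrite mulrA.
have [D0|Dn0] := eqVneq (Hs (g i) n n.+1 k y) 0.
  rewrite D0 mul0r; apply/esym.
  apply: (psumr_eq0P (P := xpredT) (F := Num n n.+1 k y)) => //.
    by move=> ai _; apply: Num_ge0.
  by rewrite sum_Num.
by rewrite mulrC divfK.
Qed.

Lemma Hs_eq n : forall t k y, Hs si n t k y = Hs (g i) n t k y.
Proof.
elim: n => [|n IH] t k y.
  by apply: eq_bigr => e _; rewrite (size0nil (size_tuple e)).
case/lastP: k => [|k' b].
  rewrite /Hs !big_pred0 // => e; apply/negP => /eqP ek;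
  by move: (@size_unzip2_tuple _ e); rewrite ek.
rewrite !Hs_rec; apply: eq_bigr => z _.
by rewrite (Gs_eq_of_Hs n (fun k y => IH n.+1 k y)).
Qed.

Local Set Implicit Arguments.
Definition upd (x : Xp X) (y : X i) : Xp X := finfun (dfwith (fun k => x k) y).

Lemma upd_at x y : upd x y i = y.
Proof. by rewrite /upd ffunE dfwith_in. Qed.

Lemma upd_out x y j : i != j -> upd x y j = x j.
Proof. by move=> ij; rewrite /upd ffunE dfwith_out. Qed.

Lemma upd_upd x y y' : upd (upd x y) y' = upd x y'.
Proof.
apply/ffunP => j; case: (eqVneq i j) => [<-|ij]; first by rewrite !upd_at.
by rewrite !upd_out.
Qed.

Lemma upd_id x : upd x (x i) = x.
Proof.
apply/ffunP => j; case: (eqVneq i j) => [<-|ij]; first by rewrite !upd_at.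
by rewrite !upd_out.
Qed.

Definition tau n (d : n.-tuple (Xp X * Ap A)) (e : n.-tuple (X i * Ap A)) :
  n.-tuple (Xp X * Ap A) :=
  [tuple (upd (tnth d k).1 (tnth e k).1, (tnth e k).2) | k < n].

Definition pii n (d : n.-tuple (Xp X * Ap A)) : n.-tuple (X i * Ap A) :=
  map_tuple (@projj i) d.

Definition ka n (e : n.-tuple (X i * Ap A)) : n.-tuple (Ap A) := map_tuple snd e.

Lemma pii_tau n d e : pii (@tau n d e) = e.
Proof.
apply: eq_from_tnth => k; rewrite /pii tnth_map tnth_mktuple /projj /= upd_at.
by case: (tnth e k).
Qed.

Lemma tau_tau n d e e' : tau (@tau n d e) e' = tau d e'.
Proof.
by apply: eq_from_tnth => k; rewrite !tnth_mktuple /= upd_upd.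
Qed.

Lemma tau_pii n d : tau d (@pii n d) = d.
Proof.
apply: eq_from_tnth => k; rewrite tnth_mktuple /pii tnth_map /projj /= upd_id.
by case: (tnth d k).
Qed.

Lemma proj_tau n d e j : i != j -> ka e = ka (pii d) ->
  map (@projj j) (@tau n d e) = map (@projj j) d.
Proof.
move=> ij hk.
suff E : map_tuple (@projj j) (tau d e) = map_tuple (@projj j) d.
  by have := congr1 val E.
apply: eq_from_tnth => k.
rewrite !tnth_map tnth_ord_tuple /projj /= upd_out //.
have := congr1 (fun u => tnth u k) hk; rewrite /ka /pii !tnth_map /projj /= => ->.
by [].
Qed.

Definition sprof : profile R X A := dfwith g si.

Lemma marg_eq t x a : marg Q1 Q sprof t x a = marg Q1 Q g t x a.
Proof.
rewrite /marg /prob.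
pose o (h : (t.-1).-tuple (Xp X * Ap A)) :=
  \prod_(j < N | j != i) fj (g j) 1 [::] [::] (map (@projj j) (rcons h (x, a))).
have Hsplit (gi : strat R X A i) (G : profile R X A) :
    G i = gi -> (forall j, i != j -> G j = g j) ->
    forall h : (t.-1).-tuple (Xp X * Ap A),
    prob_aux Q1 Q G 1 [::] [::] (rcons h (x, a)) =
    fj gi 1 [::] [::] (rcons (pii h) (x i, a)) * o h.
  move=> Gi Gj h; rewrite fact_prob /= (bigD1 i) //= Gi; congr (_ * _).
    by rewrite map_rcons.
  by apply: eq_bigr => j ji; rewrite Gj // eq_sym.
rewrite (eq_bigr _ (fun h _ => Hsplit si sprof (dfwith_in _ _) _ h)); last first.
  by move=> j ij; exact: dfwith_out.
rewrite [RHS](eq_bigr _ (fun h _ => Hsplit (g i) g erefl (fun _ _ => erefl) h)).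
apply: (@fiber_sum _ _ _ _ (@pii (t.-1)) (@ka (t.-1)) (@tau (t.-1)) o (fun e => fj si 1 [::] [::] (rcons e (x i, a))) (fun e => fj (g i) 1 [::] [::] (rcons e (x i, a)))).
- exact: pii_tau.
- exact: tau_tau.
- exact: tau_pii.
- move=> d e hk; rewrite /o; apply: eq_bigr => j ij.
  by rewrite -!cats1 !map_cat proj_tau // eq_sym.
- move=> k.
  have := Gs_eq_of_Hs (t.-1) (fun k y => Hs_eq (t.-1) (t.-1).+1 k y) k (x i) a.
  rewrite /Gs => E.
  rewrite (eq_bigl (fun e : (t.-1).-tuple (X i * Ap A) => unzip2 e == val k)); last by move=> e; rewrite -val_eqE.
  rewrite [RHS](eq_bigl (fun e : (t.-1).-tuple (X i * Ap A) => unzip2 e == val k)); last by move=> e; rewrite -val_eqE.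
  exact: E.
Qed.

End Player.
End Aux.

Theorem fact1 (R : realFieldType) (N T : nat) (X A : 'I_N -> finType)
    (Q1 : forall i : 'I_N, X i -> R)
    (Q : forall i : 'I_N, nat -> X i -> Ap A -> X i -> R)
    (Rw : 'I_N -> Xp X -> Ap A -> R)
    (hQ : valid_kernels Q1 Q)
    (i : 'I_N) (g : profile R X A)
    (hg : forall j, valid_strat (g j)) :
  exists s : profile R X A,
    (forall j, j != i -> s j = g j) /\
    valid_strat (s i) /\ markov_strat (s i) /\
    (forall t, (1 <= t <= T)%N -> forall x a,
        marg Q1 Q s t x a = marg Q1 Q g t x a) /\
    (forall j, payoff Q1 Q Rw T j s = payoff Q1 Q Rw T j g).
Proof.
have hv := hg i; case: hQ => hQ1 hQ2.
have h1 : forall x, 0 <= Q1 i x := fun x => (hQ1 i).1 x.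
have h2 : forall t x a y, 0 <= Q i t x a y := fun t x a y => (hQ2 i t x a).1 y.
have HM := marg_eq hv h1 h2.
exists (sprof Q1 Q g i); split.
  by move=> j ji; apply: dfwith_out; rewrite eq_sym.
split; first by rewrite /sprof dfwith_in; exact: si_valid.
split; first by rewrite /sprof dfwith_in; exact: si_markov.
split; first by move=> t _ x a; exact: HM.
move=> j; rewrite /payoff; apply: eq_bigr => t _; apply: eq_bigr => x _.
by apply: eq_bigr => a _; rewrite HM.
Qed.
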